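(* Let $\mathcal{M},\mathcal{M}',\mathcal{M}''$ be periodic merge trees. Then: (positivity) $d_I(\mathcal{M},\mathcal{M}')\ge0$, and $d_I(\mathcal{M},\mathcal{M}')>0$ if and only if $\mathcal{M}\ne\mathcal{M}'$; (symmetry) $d_I(\mathcal{M},\mathcal{M}')=d_I(\mathcal{M}',\mathcal{M})$; (triangle inequality) $d_I(\mathcal{M},\mathcal{M}')+d_I(\mathcal{M}',\mathcal{M}'')\ge d_I(\mathcal{M},\mathcal{M}'')$.
   Context: Each periodic merge tree here is $\mathcal{M}(F,\Lambda)$ for some $d$-dimensional lattice $\Lambda\subseteq\mathbb{R}^d$ and some $\Lambda$-periodic filter $F$ on a $\Lambda$-periodic locally finite cell complex $K$ ($\sigma+u\in K$ and $F(\sigma+u)=F(\sigma)$ for $u\in\Lambda$, $F(\sigma)\le F(\tau)$ for faces $\sigma$ of $\tau$). It is the merge tree of the quotient filter $F/\Lambda$ on the finite quotient complex $K/\Lambda$ on the torus $\mathbb{R}^d/\Lambda$: the quotient of $\{(x,s): x\in(K/\Lambda)_s\}$ ($(K/\Lambda)_s$ the sublevel set at $s$) by $(x,s)\sim(y,t)$ iff $s=t$ and $x,y$ lie in the same component of $(K/\Lambda)_s$, with quotient topology and height $h$ (the $s$-coordinate); points are identified with components of sublevel sets; $B$ covers $A$ if $h(A)\le h(B)$ and $A\subseteq B$. The frequency function $\Phi$ maps a component $\Gamma$ to its shadow monomial $\frac{\mathrm{vol}_p(\Lambda_\Gamma)}{\mathrm{vol}_d(\Lambda)}\nu_{d-p}R^{d-p}$,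 where, with $\phi\colon\mathbb{R}^d\to\mathbb{R}^d/\Lambda$ the projection, $\Lambda_\Gamma=\{u\in\Lambda:\gamma+u=\gamma\}$ for a connected component $\gamma$ of $\phi^{-1}(\Gamma)$, $p=\dim\Lambda_\Gamma$, $\mathrm{vol}_q$ is the $q$-volume of a unit cell ($\mathrm{vol}_0(\{0\})=1$) and $\nu_q$ the volume of the unit $q$-ball. Monomials are ordered by $tR^a<sR^b$ iff $a<b$, or $a=b$ and $t<s$. Two periodic merge trees are equal if there is a homeomorphism between them preserving height and frequency functions. Interleaving distance: continuous maps $\varphi\colon\mathcal{M}\to\mathcal{M}'$, $\psi\colon\mathcal{M}'\to\mathcal{M}$ (heights $h,h'$, frequencies $\Phi,\Phi'$) are $\varepsilon$-compatible ($\varepsilon\ge0$) if for all $\Gamma\in\mathcal{M}$, $\Gamma'\in\mathcal{M}'$: (i) $h'(\varphi(\Gamma))=h(\Gamma)+\varepsilon$, $h(\psi(\Gamma'))=h'(\Gamma')+\varepsilon$; (ii) $\psi(\varphi(\Gamma))$ covers $\Gamma$, $\varphi(\psi(\Gamma'))$ covers $\Gamma'$; (iii) $\Phi'(\varphi(\Gamma))\le\Phi(\Gamma)$, $\Phi(\psi(\Gamma'))\le\Phi'(\Gamma')$. $d_I(\mathcal{M},\mathcal{M}')$ is the infimum of the $\varepsilon$ admitting $\varepsilon$-compatible maps. *)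

(* Defs.v *)
From HB Require Import structures.
From mathcomp Require Import all_boot all_order all_algebra.
From mathcomp Require Import all_classical all_reals all_analysis.

Set Implicit Arguments.
Unset Strict Implicit.
Unset Printing Implicit Defensive.

Import Order.TTheory GRing.Theory Num.Theory numFieldNormedType.Exports.
Local Open Scope classical_set_scope.
Local Open Scope ring_scope.

(* Final (quotient-like) topology on a type Y induced by a map p : X -> Y:
   U is open iff p^-1(U) is open.  When p is surjective this is exactly the
   quotient topology of X by the fibres of p. *)
Definition final_top (X : topologicalType) (Y : Type) (p : X -> Y) : Type := Y.

Section FinalTop.
Context (X : topologicalType) (Y : Type) (p : X -> Y).
Local Notation FY := (final_top p).
HB.instance Definition _ := gen_eqMixin FY.
HB.instance Definition _ := gen_choiceMixin FY.

Definition final_open (U : set FY) := open (p @^-1` U).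

Lemma final_openT : final_open setT.
Proof. by rewrite /final_open preimage_setT; exact: openT. Qed.

Lemma final_openI : setI_closed final_open.
Proof. by move=> A B oA oB; rewrite /final_open preimage_setI; exact: openI. Qed.

Lemma final_open_bigU (I : Type) (f : I -> set FY) :
  (forall i, final_open (f i)) -> final_open (\bigcup_i f i).
Proof.
move=> oF; rewrite /final_open preimage_bigcup.
by apply: bigcup_open => i _; exact: oF.
Qed.

HB.instance Definition _ :=
  isOpenTopological.Build FY final_openT final_openI final_open_bigU.
End FinalTop.

Section Geometry.
Variables (R : realType) (d : nat).
Local Notation V := 'rV[R]_d.

Definition dotv (x a : V) : R := \sum_(i < d) x 0 i * a 0 i.

Definition translate (A : set V) (u : V) : set V := [set y + u | y in A].

Definition conv (S : seq V) : set V :=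
  [set x | exists w : 'I_(size S) -> R,
     (forall i, 0 <= w i) /\ \sum_i w i = 1 /\
     x = \sum_i w i *: nth 0 S (nat_of_ord i)].

Definition polytope (P : set V) : Prop :=
  exists S : seq V, S <> [::] /\ P = conv S.

Definition face (Q P : set V) : Prop :=
  Q !=set0 /\ exists (a : V) (b : R),
    (forall x, P x -> dotv x a <= b) /\ Q = P `&` [set x | dotv x a = b].

Definition cell_complex (K : set (set V)) : Prop :=
  [/\ forall s, K s -> polytope s,
      forall s t, K t -> face s t -> K s &
      forall s t, K s -> K t -> s `&` t !=set0 -> face (s `&` t) s /\ face (s `&` t) t].

Definition locally_finite (K : set (set V)) : Prop :=
  forall x : V, exists N : set V, nbhs x N /\ finite_set [set s | K s /\ s `&` N !=set0].

Definition lattice_gen (p : nat) (C : 'M[R]_(p, d)) : set V :=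
  [set u | exists z : 'rV[int]_p, u = map_mx (fun k : int => k%:~R) z *m C].

Definition lattice_dim_vol (L : set V) : nat * R :=
  xget (0%N, 1) [set pv | exists C : 'M[R]_(pv.1, d),
     [/\ row_free C, L = lattice_gen C & pv.2 = Num.sqrt (\det (C *m C^T))]].

End Geometry.

Fixpoint ball_vol (R : realType) (q : nat) : R :=
  match q with
  | 0 => 1
  | 1 => 2
  | (q'.+1 as q1).+1 => (2 * pi / q1.+1%:R) * ball_vol R q'
  end.

Section MergeTree.
Variables (R : realType) (d : nat) (B : 'M[R]_d)
          (K : set (set 'rV[R]_d)) (F : set 'rV[R]_d -> R).
Local Notation V := 'rV[R]_d.
Local Notation Lam := (lattice_gen B).

Definition coset (x : V) : set V := [set x + u | u in Lam].
Definition torus_pt := {C : set V | exists x, C = coset x}.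
Definition tproj (x : V) : torus_pt := exist _ (coset x) (ex_intro _ x erefl).
Definition torus : topologicalType := final_top tproj.

Definition sublevel (s : R) : set V :=
  \bigcup_(c in [set c | K c /\ F c <= s]) c.
Definition tsublevel (s : R) : set torus := tproj @` sublevel s.

Definition mt_base_set : set (torus * R) := [set q | tsublevel q.2 q.1].
Definition mt_base : topologicalType := set_type mt_base_set.

Definition mt_pt := {G : R * set torus |
  exists x, tsublevel G.1 x /\ G.2 = connected_component (tsublevel G.1) x}.

Definition mt_proj (q : mt_base) : mt_pt :=
  let s := (val q).2 in let x := (val q).1 in
  exist _ (s, connected_component (tsublevel s) x)
    (ex_intro _ x (conj (set_mem (valP q)) erefl)).

Definition merge_tree : topologicalType := final_top mt_proj.

Definition mt_height (G : merge_tree) : R := (proj1_sig (G : mt_pt)).1.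
Definition mt_comp (G : merge_tree) : set torus := (proj1_sig (G : mt_pt)).2.

Definition mt_covers (B0 A0 : merge_tree) : Prop :=
  mt_height A0 <= mt_height B0 /\ mt_comp A0 `<=` mt_comp B0.

(* shadow monomial, encoded as (exponent a, coefficient t) for t R^a *)
Definition mt_freq (G : merge_tree) : nat * R :=
  let pre := tproj @^-1` (mt_comp G) in
  let gam := xget set0 [set g | exists2 x, pre x & g = connected_component pre x] in
  let stab := [set u | Lam u /\ translate gam u = gam] in
  let pv := lattice_dim_vol stab in
  ((d - pv.1)%N, pv.2 / `|\det B| * ball_vol R (d - pv.1)).

End MergeTree.

Definition mono_le (R : realType) (m1 m2 : nat * R) : Prop :=
  (m1.1 < m2.1)%N \/ (m1.1 = m2.1 /\ m1.2 <= m2.2).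

Record pmt (R : realType) := PMT {
  pmt_d : nat;
  pmt_B : 'M[R]_pmt_d;
  pmt_K : set (set 'rV[R]_pmt_d);
  pmt_F : set 'rV[R]_pmt_d -> R;
  pmt_B_unit : pmt_B \in unitmx;
  pmt_K_complex : cell_complex pmt_K;
  pmt_K_locfin : locally_finite pmt_K;
  pmt_K_periodic : forall c u, lattice_gen pmt_B u -> pmt_K c ->
                     pmt_K (translate c u);
  pmt_F_periodic : forall c u, lattice_gen pmt_B u -> pmt_K c ->
                     pmt_F (translate c u) = pmt_F c;
  pmt_F_monotone : forall c t, pmt_K c -> pmt_K t -> face c t ->
                     pmt_F c <= pmt_F t
}.

Arguments pmt_d {R} _.
Arguments pmt_B {R} _.
Arguments pmt_K {R} _.
Arguments pmt_F {R} _.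
Definition MT (R : realType) (M : pmt R) : topologicalType :=
  @merge_tree R (pmt_d M) (pmt_B M) (pmt_K M) (pmt_F M).
Definition hgt (R : realType) (M : pmt R) : MT M -> R := fun G => @mt_height R (pmt_d M) (pmt_B M) (pmt_K M) (pmt_F M) G.
Definition freq (R : realType) (M : pmt R) : MT M -> nat * R := fun G => @mt_freq R (pmt_d M) (pmt_B M) (pmt_K M) (pmt_F M) G.
Definition covers (R : realType) (M : pmt R) : MT M -> MT M -> Prop :=
  fun G1 G2 => @mt_covers R (pmt_d M) (pmt_B M) (pmt_K M) (pmt_F M) G1 G2.

Definition pmt_equal (R : realType) (M M' : pmt R) : Prop :=
  exists (f : MT M -> MT M') (g : MT M' -> MT M),
    [/\ cancel f g /\ cancel g f, continuous f, continuous g,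
        forall G, hgt (f G) = hgt G & forall G, freq (f G) = freq G].

Definition compatible (R : realType) (M M' : pmt R) (e : R)
    (phi : MT M -> MT M') (psi : MT M' -> MT M) : Prop :=
  [/\ continuous phi, continuous psi,
      (forall G, hgt (phi G) = hgt G + e) /\ (forall G', hgt (psi G') = hgt G' + e),
      (forall G, covers (psi (phi G)) G) /\ (forall G', covers (phi (psi G')) G') &
      (forall G, mono_le (freq (phi G)) (freq G)) /\
      (forall G', mono_le (freq (psi G')) (freq G'))].

(* interleaving distance (an extended real; +oo if no compatible maps) *)
Definition d_I (R : realType) (M M' : pmt R) : \bar R :=
  ereal_inf [set e%:E | e in [set e : R | 0 <= e /\
     exists phi psi, @compatible R M M' e phi psi]].

(* Main.v *)
Require Import Defs.
From HB Require Import structures.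
From mathcomp Require Import all_boot all_order all_algebra.
From mathcomp Require Import all_classical all_reals all_analysis.
From mathcomp Require Import finmap.
From mathcomp Require Import ring lra.

Module Aux.
Require Import Defs.
Set Implicit Arguments.
Unset Strict Implicit.
Unset Printing Implicit Defensive.
Import Order.TTheory GRing.Theory Num.Theory numFieldNormedType.Exports.
Local Open Scope classical_set_scope.
Local Open Scope ring_scope.
Import Num.Def.
Lemma final_openE (X : topologicalType) (Y : Type) (p : X -> Y)
  (U : set (final_top p)) : open U <-> open (p @^-1` U).
Proof. by []. Qed.

Lemma final_proj_continuous (X : topologicalType) (Y : Type) (p : X -> Y) :
  continuous (p : X -> final_top p).
Proof. by apply/continuousP => A oA; rewrite -final_openE. Qed.

Lemma final_continuous (X Z : topologicalType) (Y : Type) (p : X -> Y)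
  (g : final_top p -> Z) : continuous (g \o p) -> continuous g.
Proof.
move=> gc; apply/continuousP => A oA; apply/final_openE.
by rewrite -comp_preimage; exact: (continuousP _).1 gc A oA.
Qed.

Lemma connected_sandwich (T : topologicalType) (A B : set T) :
  connected A -> A `<=` B -> B `<=` closure A -> connected B.
Proof.
move=> cA AB BcA; apply/connectedP => E [E0 BE sE].
have := connected_subset sE (_ : A `<=` E false `|` E true) cA.
case=> [| AE|AE].
- by rewrite -BE.
- case: (E0 true) => z Ez.
  have : closure (E false) z.
    by apply: (closureS AE); apply: BcA; rewrite BE; right.
  by move=> cz; case: sE => /seteqP[+ _] _ => /(_ z (conj cz Ez)).
- case: (E0 false) => z Ez.
  have : closure (E true) z.
    by apply: (closureS AE); apply: BcA; rewrite BE; left.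
  by move=> cz; case: sE => _ /seteqP[+ _] => /(_ z (conj Ez cz)).
Qed.

Lemma comp_rel_open (T : topologicalType) (I : choiceType) (A : set I)
  (P : I -> set T) (L : set T) : finite_set A ->
  (forall i, A i -> connected (P i)) -> L = \bigcup_(i in A) P i ->
  forall x, L x -> exists2 O, open O & O `&` L = connected_component L x.
Proof.
move=> finA cP LE x Lx; set C := connected_component L x.
have sub_or : forall j, A j -> P j `&` C !=set0 -> P j `<=` C.
  move=> j Aj [w [Pw Cw]].
  have -> : C = connected_component L w by exact: same_connected_component.
  apply: connected_component_max.
  - exact: Pw.
  - by rewrite LE => y Py; exists j.
  - exact: cP.
pose Z := \bigcup_(i in [set i | A i /\ P i `&` C = set0]) closure (P i).
exists (~` Z).
  apply: closed_openC; apply: closed_bigcup => [|i _]; last exact: closed_closure.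
  by apply: sub_finite_set finA => i [].
apply/seteqP; split.
- move=> y [nZy Ly]; move: (Ly); rewrite LE => -[j Aj Pjy].
  have [PC|PC] := pselect (P j `&` C !=set0); first exact: sub_or Aj PC _ Pjy.
  exfalso; apply: nZy; exists j; last exact: subset_closure.
  by split=> //; apply/eqP; apply: contra_notT PC => /set0P.
- move=> y Cy; split; last exact: connected_component_sub Cy.
  move=> [i /= [Ai PiC] clPy].
  have cB : connected (P i `|` [set y]).
    apply: (connected_sandwich (cP i Ai)); first by move=> z; left.
    by move=> z [Pz|->//]; exact: subset_closure.
  have BC : P i `|` [set y] `<=` C.
    have -> : C = connected_component L y by exact: same_connected_component.
    apply: connected_component_max => //; first by right.
    move=> z [Pz|->]; first by rewrite LE; exists i.
    exact: connected_component_sub Cy.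
  have Pi0 : P i = set0.
    by apply/seteqP; split=> // z Pz; rewrite -PiC; split => //; apply: BC; left.
  by move: clPy; rewrite Pi0 closure0.
Qed.

Lemma convex_connected (R : realType) (V : normedModType R) (A : set V) :
  (forall x y t, A x -> A y -> 0 <= t <= 1 -> A (x + t *: (y - x))) ->
  connected A.
Proof.
move=> cvA; have [[x0 Ax0]|A0] := pselect (A !=set0); last first.
  have -> : A = set0 by apply/seteqP; split=> // z Az; apply: A0; exists z.
  exact: connected0.
pose sg y := (fun t : R => x0 + t *: (y - x0)) @` `[0, 1]%classic.
have -> : A = \bigcup_(y in A) sg y.
  apply/seteqP; split=> [y Ay|z [y Ay [t t01 <-]]].
    exists y => //; exists 1; first by rewrite /= in_itv /= ler01 lexx.
    by rewrite scale1r addrC subrK.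
  apply: cvA => //; move: t01; by rewrite /= in_itv.
apply: bigcup_connected.
  exists x0 => y Ay; exists 0; first by rewrite /= in_itv /= lexx ler01.
  by rewrite scale0r addr0.
move=> y Ay; apply: connected_continuous_connected.
  exact: segment_connected.
apply: continuous_subspaceT => t; apply: cvgD; first exact: cvg_cst.
by apply: cvgZ; [exact: cvg_id|exact: cvg_cst].
Qed.

Lemma mulmxr_bound (R : realType) (d : nat) (B : 'M[R]_d) (l : 'rV[R]_d) :
  `|l *m B| <= `|l| * \sum_i \sum_j `|B i j|.
Proof.
have nge : forall (m n : nat) (M : 'M[R]_(m, n)) i j, `|M i j| <= `|M|.
  move=> m n M i j; rewrite [X in _ <= X]/normr /= mx_normrE.
  by apply: le_trans (le_bigmax _ _ (i, j)) => //.
rewrite [X in X <= _]/normr /= mx_normrE; apply/bigmax_leP; split.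
  by apply: mulr_ge0 => //; apply: sumr_ge0 => i _; apply: sumr_ge0.
move=> [i0 j] _ /=; rewrite mxE.
apply: le_trans (ler_norm_sum _ _ _) _.
rewrite mulr_sumr; apply: ler_sum => i _.
rewrite normrM; apply: le_trans (_ : `|l| * `|B i j| <= _).
  by apply: ler_wpM2r => //; rewrite (ord1 i0); exact: nge.
apply: ler_wpM2l => //.
by rewrite (bigD1 j) //= lerDl; apply: sumr_ge0.
Qed.

Lemma mulmxr_continuous (R : realType) (d : nat) (B : 'M[R]_d) :
  continuous (fun l : 'rV[R]_d => l *m B).
Proof.
move=> x; set C := \sum_i \sum_j `|B i j|.
have C0 : 0 <= C by apply: sumr_ge0 => i _; apply: sumr_ge0.
apply/(@cvgrPdist_lt _ _ _ (nbhs x) (nbhs_filter x)) => e e0; near=> y.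
rewrite -mulmxBl; apply: le_lt_trans (mulmxr_bound _ _) _.
have : `|x - y| < e / (C + 1).
  near: y; apply/nbhs_ballP; exists (e / (C + 1)) => /=.
    by rewrite divr_gt0 // ltr_wpDl.
  by move=> z; rewrite mx_norm_ball.
move=> h; apply: le_lt_trans (_ : `|x - y| * (C + 1) < e).
  by apply: ler_wpM2l => //; rewrite lerDl.
by rewrite -ltr_pdivlMr // ltr_wpDl.
Unshelve. all: by end_near.
Qed.

Lemma finite_pos_min (R : realType) (X : set R) : finite_set X ->
  (forall x, X x -> 0 < x) -> exists2 e, 0 < e & forall x, X x -> e <= x.
Proof.
move=> /finite_seqP[F ->] Xpos.
suff : forall s : seq R, exists2 e : R, 0 < e &
    forall x, x \in s -> x \in F -> e <= x.
  by case/(_ F) => e e0 H; exists e => // x Fx; exact: H.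
elim=> [|a s [e e0 IH]]; first by exists 1.
have [aF|aF] := boolP (a \in F).
  exists (Num.min e a); first by rewrite lt_min e0 Xpos.
  move=> x; rewrite inE => /orP[/eqP->|xs] xF; first by rewrite ge_min lexx orbT.
  by rewrite ge_min IH.
exists e => // x; rewrite inE => /orP[/eqP->|xs] xF; first by rewrite xF in aF.
exact: IH.
Qed.

Lemma sig_eq (T : Type) (P : T -> Prop) (a b : {x | P x}) :
  proj1_sig a = proj1_sig b -> a = b.
Proof.
case: a b => a Pa [b Pb] /= ab; subst b; congr exist; exact: Prop_irrelevance.
Qed.

Lemma zm_a1 (V : zmodType) (x y u : V) : y + (x - y + u) = x + u.
Proof. by rewrite addrA [y + _]addrC subrK. Qed.
Lemma zm_a2 (V : zmodType) (x y u : V) : x + (u - (x - y)) = y + u.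
Proof. by rewrite opprB addrCA [x + _]addrC subrK addrC. Qed.
Lemma zm_a3 (V : zmodType) (x u : V) : x + u - x = u.
Proof. by rewrite [x + u]addrC addrK. Qed.

Section Lattice.
Variables (R : realType) (d : nat) (B : 'M[R]_d).
Local Notation V := 'rV[R]_d.
Local Notation Lam := (lattice_gen B).

Lemma Lam0 : Lam 0.
Proof.
exists 0; rewrite (_ : map_mx _ 0 = 0) ?mul0mx //.
by apply/matrixP => i j; rewrite !mxE.
Qed.

Lemma LamD u v : Lam u -> Lam v -> Lam (u + v).
Proof.
move=> [z1 ->] [z2 ->]; exists (z1 + z2); rewrite -mulmxDl; congr (_ *m _).
by apply/matrixP => i j; rewrite !mxE intrD.
Qed.

Lemma LamN u : Lam u -> Lam (- u).
Proof.
move=> [z ->]; exists (- z); rewrite -mulNmx; congr (_ *m _).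
by apply/matrixP => i j; rewrite !mxE intrN.
Qed.

Lemma LamB u v : Lam u -> Lam v -> Lam (u - v).
Proof. by move=> Lu Lv; apply: LamD => //; exact: LamN. Qed.

Lemma tproj_eq (x y : V) : Lam (x - y) -> tproj B x = tproj B y.
Proof.
move=> Lxy; apply: sig_eq => /=; apply/seteqP; split.
  move=> z [u Lu <-]; exists (x - y + u); first exact: LamD.
  exact: zm_a1.
move=> z [u Lu <-]; exists (u - (x - y)); first exact: LamB.
exact: zm_a2.
Qed.

Lemma tproj_eqP (x y : V) : tproj B x = tproj B y -> Lam (x - y).
Proof.
move=> /(congr1 (@proj1_sig _ _)) /= exy.
have : coset B x y by rewrite exy; exists 0; [exact: Lam0|rewrite addr0].
move=> [u Lu yE]; rewrite -yE opprD addrA subrr add0r; exact: LamN.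
Qed.

Lemma tproj_surj (z : torus B) : exists x, tproj B x = z.
Proof.
case: z => C [x CE]; exists x; apply: sig_eq => /=; by rewrite CE.
Qed.

Lemma translateK (c : set V) u : translate (translate c u) (- u) = c.
Proof.
apply/seteqP; split=> [y [z [w cw <-] <-]|y cy].
  by rewrite addrK.
by exists (y + u); [exists y|rewrite addrK].
Qed.

Lemma tproj_translate (c : set V) u : Lam u ->
  tproj B @` translate c u = tproj B @` c.
Proof.
move=> Lu; apply/seteqP; split=> [z [y [w cw <-] <-]|z [y cy <-]].
  exists w => //; apply: tproj_eq.
  by rewrite opprD addrA subrr add0r; exact: LamN.
exists (y + u); first by exists y.
by apply: tproj_eq; rewrite zm_a3.
Qed.

End Lattice.

Section Finiteness.
Variables (R : realType) (d : nat) (B : 'M[R]_d) (K : set (set 'rV[R]_d)).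
Local Notation V := 'rV[R]_d.
Local Notation Lam := (lattice_gen B).
Hypothesis Bu : B \in unitmx.
Hypothesis Kloc : locally_finite K.
Hypothesis Kper : forall c u, Lam u -> K c -> K (translate c u).

Definition cube : set V := [set v | forall i, `[0, 1]%classic (v ord0 i)].

Lemma fundamental (x : V) :
  exists2 u, Lam u & exists2 l, cube l & x = l *m B + u.
Proof.
pose l0 := x *m invmx B.
pose z : 'rV[int]_d := \row_j Num.floor (l0 ord0 j).
pose mz := map_mx (fun k : int => k%:~R : R) z.
exists (mz *m B); first by exists z.
exists (l0 - mz).
  move=> i; have -> : (l0 - mz) ord0 i =
      l0 ord0 i - (Num.floor (l0 ord0 i))%:~R by rewrite !mxE.
  move: (l0 ord0 i) => a; rewrite /= in_itv /=; apply/andP; split.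
    by rewrite subr_ge0 Num.Theory.floor_le.
  rewrite lerBlDl; apply: ltW; rewrite -[1 in X in _ < X]/(1%:~R) -intrD.
  exact: Num.Theory.floorD1_gt.
by rewrite mulmxBl subrK /l0 mulmxKV.
Qed.

Lemma finite_reps : exists2 S : set (set V), finite_set S &
  S `<=` K /\ forall c, K c -> c !=set0 ->
    exists2 c', S c' & exists2 u, Lam u & c = translate c' u.
Proof.
have Qc : compact cube.
  rewrite /cube; apply: (@rV_compact R d (fun=> `[0, 1]%classic)) => _.
  exact: segment_compact.
have Dc : compact ((fun l => l *m B) @` cube).
  apply: continuous_compact Qc; apply: continuous_subspaceT.
  exact: mulmxr_continuous.
pose N x := proj1_sig (cid (Kloc x)).
have NP x : nbhs x (N x) /\ finite_set [set s | K s /\ s `&` N x !=set0].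
  exact: (proj2_sig (cid (Kloc x))).
move: Dc; rewrite compact_cover => Dc.
have [D' D'sub cov] := Dc V _ (fun x => interior (N x))
  (fun x _ => @open_interior _ (N x))
  (fun x Dx => ex_intro2 _ _ x Dx ((NP x).1)).
exists (\bigcup_(w in [set` D']) [set s | K s /\ s `&` N w !=set0]).
  apply: bigcup_finite; first exact: finite_fset.
  by move=> x _; exact: (NP x).2.
split; first by move=> s [x _ []].
move=> c Kc [y cy].
have [u Lu [l cl yE]] := fundamental y.
have [x D'x Nz] := cov (l *m B) (ex_intro2 _ _ l cl erefl).
exists (translate c (- u)).
  exists x => //; split; first by apply: Kper => //; exact: LamN.
  exists (l *m B); split; last exact: interior_subset.
  by exists y => //; rewrite yE addrK.
by exists u => //; rewrite -{2}(opprK u) translateK.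
Qed.

End Finiteness.

Section Cells.
Variables (R : realType) (d : nat).
Local Notation V := 'rV[R]_d.

Lemma conv_convex (S : seq V) x y t : conv S x -> conv S y -> 0 <= t <= 1 ->
  conv S (x + t *: (y - x)).
Proof.
move=> [w [w0 [w1 ->]]] [w' [w'0 [w'1 ->]]] /andP[t0 t1].
exists (fun i => w i + t * (w' i - w i)); split; [|split].
- move=> i; have -> : w i + t * (w' i - w i) = (1 - t) * w i + t * w' i.
    by ring.
  by rewrite addr_ge0 // mulr_ge0 // subr_ge0.
- by rewrite big_split /= -mulr_sumr sumrB w1 w'1 subrr mulr0 addr0.
- rewrite -sumrB scaler_sumr -big_split /=; apply: eq_bigr => i _.
  by rewrite -scalerBl scalerA -scalerDl.
Qed.

Lemma conv_nonempty (S : seq V) : S <> [::] -> conv S !=set0.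
Proof.
case: S => [//|a s] _.
exists a; exists (fun i => if nat_of_ord i == 0%N then 1 else 0); split; [|split].
- by move=> i; case: ifP.
- rewrite big_ord_recl /= big1 ?addr0 // => i _.
- rewrite big_ord_recl /= scale1r big1 ?addr0 // => i _; by rewrite scale0r.
Qed.

Lemma polytope_nonempty (c : set V) : polytope c -> c !=set0.
Proof. by move=> [S [S0 ->]]; exact: conv_nonempty. Qed.

Lemma polytope_connected (c : set V) : polytope c -> connected c.
Proof.
move=> [S [_ ->]]; apply: convex_connected => x y t xS yS t01.
exact: conv_convex.
Qed.

End Cells.

Definition Lv (R : realType) (M : pmt R) (s : R) : set (torus (pmt_B M)) :=
  @tsublevel R (pmt_d M) (pmt_B M) (pmt_K M) (pmt_F M) s.
Definition cmp (R : realType) (M : pmt R) (G : MT M) : set (torus (pmt_B M)) :=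
  @mt_comp R (pmt_d M) (pmt_B M) (pmt_K M) (pmt_F M) G.

Arguments Lv {R} M s.
Arguments cmp {R M} G.

Section PMT.
Variables (R : realType) (M : pmt R).
Local Notation d := (pmt_d M).
Local Notation B := (pmt_B M).
Local Notation K := (pmt_K M).
Local Notation F := (pmt_F M).
Local Notation V := 'rV[R]_d.
Local Notation Lam := (lattice_gen B).
Local Notation tp := (tproj B).
Local Notation L := (Lv M).

Lemma Lv_mono r r' : r <= r' -> L r `<=` L r'.
Proof.
move=> rr' z [y [c [Kc Fc] cy] <-]; exists y => //; exists c => //.
by split => //; apply: le_trans rr'.
Qed.

Lemma finite_reps_M : exists2 S : set (set V), finite_set S &
  S `<=` K /\ forall c, K c -> c !=set0 ->
    exists2 c', S c' & exists2 u, Lam u & c = translate c' u.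
Proof.
apply: finite_reps; [exact: pmt_B_unit|exact: pmt_K_locfin|].
exact: pmt_K_periodic.
Qed.

Definition Reps : set (set V) := proj1_sig (cid2 finite_reps_M).
Lemma Reps_fin : finite_set Reps.
Proof. exact: (proj2_sig (cid2 finite_reps_M)).1. Qed.
Lemma Reps_K : Reps `<=` K.
Proof. exact: (proj2_sig (cid2 finite_reps_M)).2.1. Qed.
Lemma Reps_cover c : K c -> exists2 c', Reps c' & exists2 u, Lam u & c = translate c' u.
Proof.
move=> Kc; apply: (proj2_sig (cid2 finite_reps_M)).2.2 => //.
by apply: polytope_nonempty; case: (pmt_K_complex M) => + _ _; apply.
Qed.

Lemma K_poly c : K c -> polytope c.
Proof. by case: (pmt_K_complex M) => + _ _; apply. Qed.

Lemma Lv_reps s : L s = \bigcup_(c in [set c | Reps c /\ F c <= s]) tp @` c.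
Proof.
apply/seteqP; split.
  move=> z [y [c [Kc Fc] cy] <-].
  have [c' Rc' [u Lu cE]] := Reps_cover Kc.
  have Fc' : F c = F c' by rewrite cE (pmt_F_periodic Lu (Reps_K Rc')).
  exists c'; first by split => //; rewrite -Fc'.
  by rewrite -(tproj_translate c' Lu) -cE; exists y.
move=> z [c [Rc Fc] [y cy <-]]; exists y => //; exists c => //.
by split => //; exact: Reps_K.
Qed.

Definition Wv : set R := F @` Reps.
Lemma Wv_fin : finite_set Wv.
Proof. exact/finite_image/Reps_fin. Qed.

Lemma Lv_eqW r r' : (forall w, Wv w -> (w <= r) = (w <= r')) -> L r = L r'.
Proof.
move=> H; rewrite !Lv_reps; congr (\bigcup_(c in _) _).
apply/seteqP; split=> c [Rc Fc]; split => //.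
  by rewrite -H //; exists c.
by rewrite H //; exists c.
Qed.

Lemma Lv_rc r0 : exists2 e, 0 < e & forall r, r0 <= r -> r < r0 + e -> L r = L r0.
Proof.
have [e e0 He] : exists2 e, 0 < e &
    forall x, [set w - r0 | w in [set w | Wv w /\ r0 < w]] x -> e <= x.
  apply: finite_pos_min; last by move=> _ [w [_ h] <-]; rewrite subr_gt0.
  apply: finite_image; apply: sub_finite_set Wv_fin; by move=> w [].
exists e => // r r0r rr0; apply: Lv_eqW => w Ww.
apply/idP/idP => [wr|wr0]; last exact: le_trans r0r.
rewrite leNgt; apply/negP => r0w.
have h := He (w - r0) (ex_intro2 _ _ w (conj Ww r0w) erefl).
have : r < w by lra.
by rewrite ltNge wr.
Qed.

Lemma tp_continuous : continuous (tp : V -> torus B).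
Proof. exact: final_proj_continuous. Qed.

Lemma piece_connected c : K c -> connected (tp @` c : set (torus B)).
Proof.
move=> Kc; apply: connected_continuous_connected; first exact/polytope_connected/K_poly.
exact/continuous_subspaceT/tp_continuous.
Qed.

Lemma Lv_comp_open s x : L s x ->
  exists2 O, open O & O `&` L s = connected_component (L s) x.
Proof.
apply: (@comp_rel_open (torus B) _ [set c | Reps c /\ F c <= s]
   (fun c => tp @` c) (L s) _ _ (Lv_reps s)).
- by apply: sub_finite_set Reps_fin => c [].
- by move=> c [Rc _]; apply: piece_connected; exact: Reps_K.
Qed.

End PMT.
Arguments Reps {R} M _.
Arguments Wv {R} M _.

Lemma open_prod (X Y : topologicalType) (O : set X) (P : set Y) :
  open O -> open P -> open [set p : X * Y | O p.1 /\ P p.2].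
Proof.
move=> oO oP; rewrite openE => -[a b] /= [Oa Pb]; rewrite /interior.
exists (O, P) => /=; first by split; apply: open_nbhs_nbhs.
by move=> [x y] [/= Ox Py].
Qed.

Lemma ballRE (R : realType) (x e y : R) : ball x e y = (x - e < y < x + e).
Proof. by rewrite -ball_normE /ball_ /= ltr_distlC. Qed.

Section MTbasics.
Variables (R : realType) (M : pmt R).
Local Notation d := (pmt_d M).
Local Notation B := (pmt_B M).
Local Notation K := (pmt_K M).
Local Notation F := (pmt_F M).
Local Notation V := 'rV[R]_d.
Local Notation tp := (tproj B).
Local Notation L := (Lv M).
Local Notation base := (@mt_base R d B K F).
Local Notation mproj := (@mt_proj R d B K F).

Lemma mtP (G : MT M) :
  exists2 x, L (hgt G) x & cmp G = connected_component (L (hgt G)) x.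
Proof. by case: G => [[s C] [x [Lx CE]]] /=; exists x. Qed.

Lemma mt_ext (G1 G2 : MT M) : hgt G1 = hgt G2 -> cmp G1 = cmp G2 -> G1 = G2.
Proof.
case: G1 => [[s1 C1] P1]; case: G2 => [[s2 C2] P2].
rewrite /hgt /cmp /mt_height /mt_comp /= => e1 e2.
by apply: sig_eq => /=; rewrite e1 e2.
Qed.

Lemma mk_mt s x : L s x ->
  exists G : MT M, hgt G = s /\ cmp G = connected_component (L s) x.
Proof.
move=> Lx.
by exists (exist _ (s, connected_component (L s) x) (ex_intro _ x (conj Lx erefl))).
Qed.

Lemma cmp_in (G : MT M) : exists2 x, L (hgt G) x & cmp G x.
Proof.
have [x Lx ->] := mtP G; exists x => //; exact: connected_component_refl.
Qed.

Lemma cmp_sub (G : MT M) : cmp G `<=` L (hgt G).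
Proof. by have [x Lx ->] := mtP G; exact: connected_component_sub. Qed.

Lemma cmp_cc (G : MT M) y : cmp G y -> cmp G = connected_component (L (hgt G)) y.
Proof. by have [x Lx ->] := mtP G; exact: same_connected_component. Qed.

Lemma cmp_eq (G1 G2 : MT M) : L (hgt G1) = L (hgt G2) ->
  cmp G1 `<=` cmp G2 -> cmp G1 = cmp G2.
Proof.
move=> LE sub; have [x Lx Cx] := cmp_in G1.
by rewrite (cmp_cc Cx) (cmp_cc (sub _ Cx)) LE.
Qed.

Lemma relevel (G : MT M) r : L r = L (hgt G) ->
  exists G' : MT M, hgt G' = r /\ cmp G' = cmp G.
Proof.
move=> LE; have [x Lx CE] := mtP G.
have Lr : L r x by rewrite LE.
have [G' [h1 h2]] := @mk_mt r x Lr.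
by exists G'; split => //; rewrite h2 CE LE.
Qed.

Lemma freq_cmp (G1 G2 : MT M) : cmp G1 = cmp G2 -> freq G1 = freq G2.
Proof. by rewrite /freq /mt_freq /cmp => ->. Qed.

Lemma proj_hgt (q : base) : hgt (mproj q : MT M) = (set_val q).2.
Proof. by []. Qed.

Lemma proj_cmp (q : base) :
  cmp (mproj q : MT M) = connected_component (L (set_val q).2) (set_val q).1.
Proof. by []. Qed.

Lemma base_mem (q : base) : L (set_val q).2 (set_val q).1.
Proof. by case: q => -[y r] /= /set_mem. Qed.

Lemma mk_base y r : L r y -> exists q : base, set_val q = (y, r).
Proof. by move=> Lry; exists (exist _ (y, r) (mem_set Lry)). Qed.

Lemma mproj_cont : continuous (mproj : base -> MT M).
Proof. exact: final_proj_continuous. Qed.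

Lemma base_open (A : set (torus B * R)) : open A -> open (set_val @^-1` A : set base).
Proof. by move=> oA; exists A. Qed.

Lemma base_cont (X : topologicalType) (f : X -> base) :
  continuous (set_val \o f) -> continuous f.
Proof.
move=> fc; apply/continuousP => Q [A oA <-].
by rewrite -comp_preimage; exact: (continuousP _).1 fc A oA.
Qed.

Lemma near_ball_R (U : set R) (x : R) : open U -> U x ->
  exists2 e, 0 < e & forall y, `|y - x| < e -> U y.
Proof.
move=> oU Ux; have /nbhs_ballP[e e0 sub] : nbhs x U by exact: open_nbhs_nbhs.
exists e => // y yx; apply: sub; rewrite -ball_normE /ball_ /= distrC //.
Qed.

Lemma base_open_near (Q : set base) (q : base) : open Q -> Q q ->
  exists2 e, 0 < e & forall q' : base, (set_val q').1 = (set_val q).1 ->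
    `|(set_val q').2 - (set_val q).2| < e -> Q q'.
Proof.
case=> A oA <- Aq.
pose g := fun r : R => ((set_val q).1, r) : (torus B * R)%type.
have gc : continuous g.
  move=> r; rewrite /g.
  exact: (@cvg_pair _ _ _ (nbhs r) (nbhs (set_val q).1) (nbhs r) _ _ _
    (fun _ => (set_val q).1) id (cvg_cst _) cvg_id).
have gq : (g @^-1` A) (set_val q).2 by rewrite /g /preimage /= -surjective_pairing.
have [e e0 He] := @near_ball_R (g @^-1` A) (set_val q).2
  ((continuousP _).1 gc A oA) gq.
exists e => // q' e1 lt; rewrite /preimage /=.
by have := He _ lt; rewrite /g /preimage /= -e1 -surjective_pairing.
Qed.

Lemma local_nbhd (H : MT M) : exists U : set (MT M), [/\ open U, U H &
  forall G, U G -> cmp G `<=` cmp H /\ (hgt H <= hgt G -> cmp G = cmp H)].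
Proof.
set r0 := hgt H.
have [eta eta0 rc] := Lv_rc M r0.
have [y0 Ly0 Hy0] := cmp_in H.
have [Op oO OE] := Lv_comp_open Ly0.
rewrite -(cmp_cc Hy0) in OE.
exists [set G : MT M | ball r0 eta (hgt G) /\ cmp G `<=` cmp H]; split.
- apply/final_openE.
  have -> : mproj @^-1` [set G : MT M | ball r0 eta (hgt G) /\ cmp G `<=` cmp H]
      = set_val @^-1` [set p | Op p.1 /\ ball r0 eta p.2].
    apply/seteqP; split => q /=.
    + move=> [bq sub]; split => //.
      have := connected_component_refl (base_mem q).
      by rewrite -proj_cmp => /sub; rewrite -OE => -[].
    + move=> [Oy bq]; split => //.
      rewrite proj_cmp; move: bq; rewrite ballRE => /andP[lo hi].
      have Ly := base_mem q.
      have [r0r|rr0] := leP r0 (set_val q).2.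
        have LE := rc _ r0r hi.
        have Hy : cmp H (set_val q).1 by rewrite -OE; split => //; rewrite -LE.
        by rewrite LE -(cmp_cc Hy).
      have Ly' : L r0 (set_val q).1 by apply: (Lv_mono (ltW rr0)).
      have Hy : cmp H (set_val q).1 by rewrite -OE.
      rewrite (cmp_cc Hy); apply: connected_component_max => //.
      - exact: connected_component_refl.
      - move=> z /connected_component_sub Lz.
        exact: (Lv_mono (ltW rr0) Lz).
      - exact: component_connected.
  apply: base_open; apply: open_prod => //; exact: ball_open.
- by split => //; rewrite ballRE /r0; apply/andP; split; lra.
- move=> G [bG sub]; split => // rG; apply: cmp_eq => //.
  move: bG; rewrite ballRE => /andP[_ hi].
  exact: rc.
Qed.

Lemma near_below (U : set (MT M)) (H : MT M) : open U -> U H ->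
  exists2 eta, 0 < eta & forall G : MT M, `|hgt G - hgt H| < eta ->
    cmp G `<=` cmp H -> U G.
Proof.
move=> oU UH; set s := hgt H.
have oQ : open (mproj @^-1` U) by apply/final_openE.
pose pt (c : set V) := xget (0 : V) c.
pose Good c := Reps M c /\ cmp H (tp (pt c)).
pose Pn c e := forall q' : base, (set_val q').1 = tp (pt c) ->
  `|(set_val q').2 - s| < e -> U (mproj q').
have ex : forall c, exists e, 0 < e /\ (Good c -> Pn c e).
  move=> c; have [[Rc Hc]|NG] := pselect (Good c); last by exists 1; split.
  have Ls : L s (tp (pt c)) by exact: cmp_sub Hc.
  have [q qE] := mk_base Ls.
  have Qq : U (mproj q).
    suff -> : mproj q = H by [].
    apply: mt_ext; first by rewrite proj_hgt qE.
    by rewrite proj_cmp qE /= (cmp_cc Hc).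
  have [e e0 He] := base_open_near oQ Qq.
  exists e; split => // _ q' q'1 q'2; apply: He; first by rewrite q'1 qE.
  by rewrite qE.
have [ef efP] := choice ex.
have [eta eta0 etaP] : exists2 eta, 0 < eta & forall x, (ef @` Good) x -> eta <= x.
  apply: finite_pos_min; last by move=> _ [c _ <-]; exact: (efP c).1.
  by apply: finite_image; apply: sub_finite_set (@Reps_fin R M) => c [].
exists eta => // G Gs GH.
have [y Ly Gy] := cmp_in G.
move: (Ly); rewrite Lv_reps => -[c [Rc Fc] [z cz zy]].
have ptc : c (pt c) by apply: xgetPex; exists z.
have pieceL : tp @` c `<=` L (hgt G).
  by rewrite Lv_reps => w cw; exists c.
have pieceG : tp @` c `<=` cmp G.
  rewrite (cmp_cc Gy).
  apply: (@connected_component_max (torus B) (L (hgt G)) (tp @` c : set (torus B)) y).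
  - by exists z.
  - exact: pieceL.
  - exact/piece_connected/Reps_K.
have Gpt : cmp G (tp (pt c)) by apply: pieceG; exists (pt c).
have Gc : Good c by split => //; exact: GH.
have [q' q'E] := mk_base (pieceL _ (ex_intro2 _ _ (pt c) ptc erefl)).
have -> : G = mproj q'.
  apply: mt_ext; first by rewrite proj_hgt q'E.
  by rewrite proj_cmp q'E /= -(cmp_cc Gpt).
apply: ((efP c).2 Gc) => //; first by rewrite q'E.
rewrite q'E /=; apply: lt_le_trans Gs _; apply: etaP; exists c => //.
Qed.

End MTbasics.

Lemma coversE (R : realType) (M : pmt R) (G1 G2 : MT M) :
  covers G1 G2 <-> hgt G2 <= hgt G1 /\ cmp G2 `<=` cmp G1.
Proof. by []. Qed.

Section Mono.
Variables (R : realType) (M M' : pmt R) (e : R) (phi : MT M -> MT M').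
Hypothesis phic : continuous phi.
Hypothesis phih : forall G, hgt (phi G) = hgt G + e.
Local Notation L := (Lv M).

Lemma mono (A A' : MT M) : covers A' A -> covers (phi A') (phi A).
Proof.
move=> /coversE [ab sub]; set a := hgt A; set b := hgt A'.
have [x Lx Ax] := cmp_in A.
have Lt : forall t, L (Num.max t a) x.
  by move=> t; apply: (Lv_mono _ Lx); rewrite le_max lexx orbT.
pose qf t : @mt_base R (pmt_d M) (pmt_B M) (pmt_K M) (pmt_F M) :=
  exist _ (x, Num.max t a) (mem_set (Lt t)).
pose gam t : MT M := @mt_proj R (pmt_d M) (pmt_B M) (pmt_K M) (pmt_F M) (qf t).
have hgam t : hgt (gam t) = Num.max t a by [].
have cgam t : cmp (gam t) = connected_component (L (Num.max t a)) x by [].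
have gamc : continuous gam.
  move=> t; apply: continuous_comp; last exact: mproj_cont.
  apply: (base_cont (f := qf)) => {}t.
  exact: (@cvg_pair _ _ _ (nbhs t) (nbhs x) (nbhs (Num.max t a)) _ _ _
    (fun _ => x) (fun t => Num.max t a) (cvg_cst _)
    (@continuous_max _ _ id (fun=> a) t cvg_id (cvg_cst _))).
have gama : gam a = A.
  apply: mt_ext; first by rewrite hgam maxxx.
  by rewrite cgam maxxx (cmp_cc Ax).
have gamb : gam b = A'.
  apply: mt_ext; first by rewrite hgam; apply/max_idPl.
  by rewrite cgam (max_idPl ab) (cmp_cc (sub _ Ax)).
pose rho t := cmp (phi (gam t)).
have loc : forall t, exists2 del, 0 < del & forall t', `|t' - t| < del ->
    rho t' `<=` rho t /\ (t <= t' -> rho t' = rho t).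
  move=> t; have := @local_nbhd R M' (phi (gam t)).
  move=> [U [oU UH Uprop]].
  have pc : continuous (phi \o gam).
    by move=> t0; apply: continuous_comp; [exact: gamc|exact: phic].
  have [del del0 Hd] := near_ball_R ((continuousP _).1 pc U oU) UH.
  exists del => // t' tt'; have [s1 s2] := Uprop _ (Hd _ tt'); split => // tt.
  apply: s2; rewrite !phih !hgam lerD2r; apply: le_max2 => //.
have hS : has_sup [set t | a <= t <= b /\ rho a `<=` rho t].
  split; first by exists a; split => //; rewrite lexx ab.
  by exists b => t [/andP[_ ?] _].
set S := [set t | a <= t <= b /\ rho a `<=` rho t] in hS.
set ts := sup S.
have ub := sup_upper_bound hS.
have tsb : ts <= b by apply: ge_sup; [exact: hS.1|move=> t [/andP[_ ?] _]].
have ats : a <= ts by apply: ub; split => //; rewrite lexx ab.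
have [del del0 Hd] := loc ts.
have tsS : S ts.
  have [t1 St1 lt1] := sup_adherent del0 hS.
  have t1ts : t1 <= ts by exact: ub.
  split; first by rewrite ats tsb.
  apply: subset_trans St1.2 _; apply: (Hd t1 _).1.
  by rewrite ler0_norm ?subr_le0 // opprB ltrBlDr addrC -ltrBlDr.
have tsE : ts = b.
  apply/eqP; rewrite eq_le tsb /=; rewrite leNgt; apply/negP => tslt.
  have [t2 [t2a t2b t2d]] : exists t2, [/\ ts < t2, t2 <= b & t2 - ts < del].
    have [h|h] := leP (ts + del / 2) b.
      by exists (ts + del / 2); split => //; lra.
    by exists b; split => //; lra.
  have : S t2.
    split; first by apply/andP; split => //; lra.
    rewrite ((Hd t2 _).2 (ltW t2a)); first exact: tsS.2.
    by rewrite gtr0_norm // subr_gt0.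
  by move/ub; rewrite leNgt t2a.
apply/coversE; split; first by rewrite !phih lerD2r.
by rewrite -gama -gamb -/(rho a) -/(rho b) -tsE; exact: tsS.2.
Qed.

End Mono.

Lemma inf_add (R : realType) (S1 S2 S3 : set R) :
  (forall x, S1 x -> 0 <= x) -> (forall y, S2 y -> 0 <= y) ->
  (forall x y, S1 x -> S2 y -> S3 (x + y)) ->
  (ereal_inf [set x%:E | x in S3] <=
   ereal_inf [set x%:E | x in S1] + ereal_inf [set x%:E | x in S2])%E.
Proof.
move=> p1 p2 S123.
have lb1 : (0 <= ereal_inf [set x%:E | x in S1])%E.
  by apply: le_ereal_inf_tmp => _ [x Sx <-]; rewrite lee_fin p1.
have lb2 : (0 <= ereal_inf [set x%:E | x in S2])%E.
  by apply: le_ereal_inf_tmp => _ [x Sx <-]; rewrite lee_fin p2.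
have [[x0 S1x0]|N1] := pselect (S1 !=set0); last first.
  have -> : S1 = set0 by apply/seteqP; split=> // z Sz; apply: N1; exists z.
  by rewrite image_set0 ereal_inf0 addye ?leey // gt_eqF // (lt_le_trans _ lb2).
have [[y0 S2y0]|N2] := pselect (S2 !=set0); last first.
  have -> : S2 = set0 by apply/seteqP; split=> // z Sz; apply: N2; exists z.
  by rewrite image_set0 ereal_inf0 addey ?leey // gt_eqF // (lt_le_trans _ lb1).
have fin1 : ereal_inf [set x%:E | x in S1] \is a fin_num.
  rewrite ge0_fin_numE //; apply: le_lt_trans (ltry x0).
  by apply: ge_ereal_inf; exists x0%:E => //; exists x0.
have fin2 : ereal_inf [set x%:E | x in S2] \is a fin_num.
  rewrite ge0_fin_numE //; apply: le_lt_trans (ltry y0).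
  by apply: ge_ereal_inf; exists y0%:E => //; exists y0.
apply/lee_addgt0Pr => eps eps0.
have eps2 : 0 < eps / 2 by rewrite divr_gt0.
have [_ [x Sx <-] xlt] := lb_ereal_inf_adherent eps2 fin1.
have [_ [y Sy <-] ylt] := lb_ereal_inf_adherent eps2 fin2.
apply: le_trans (_ : ((x + y)%:E <= _)%E).
  by apply: ge_ereal_inf; exists (x + y)%:E => //; exists (x + y) => //; exact: S123.
move: xlt ylt; rewrite -(fineK fin1) -(fineK fin2) -!EFinD !lte_fin lee_fin.
move=> h1 h2; lra.
Qed.

Definition Eset (R : realType) (M M' : pmt R) : set R :=
  [set e : R | 0 <= e /\ exists phi psi, @compatible R M M' e phi psi].

Lemma dIE (R : realType) (M M' : pmt R) :
  d_I M M' = ereal_inf [set e%:E | e in Eset M M'].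
Proof. by []. Qed.

Lemma dI_ge0 (R : realType) (M M' : pmt R) : (0 <= d_I M M')%E.
Proof. by apply: le_ereal_inf_tmp => _ [x [x0 _] <-]; rewrite lee_fin. Qed.

Lemma compat_sym (R : realType) (M M' : pmt R) e phi psi :
  @compatible R M M' e phi psi -> @compatible R M' M e psi phi.
Proof. by case=> c1 c2 [h1 h2] [v1 v2] [f1 f2]; split. Qed.

Lemma dI_sym (R : realType) (M M' : pmt R) : d_I M M' = d_I M' M.
Proof.
rewrite !dIE; congr ereal_inf; congr image; apply/seteqP.
by split=> e [e0 [phi [psi c]]]; split => //; exists psi, phi; exact: compat_sym.
Qed.

Lemma covers_trans (R : realType) (M : pmt R) (G1 G2 G3 : MT M) :
  covers G1 G2 -> covers G2 G3 -> covers G1 G3.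
Proof.
move=> /coversE[h12 c12] /coversE[h23 c23]; apply/coversE; split.
  exact: le_trans h12.
exact: subset_trans c12.
Qed.

Lemma mono_le_trans (R : realType) (a b c : nat * R) :
  mono_le a b -> mono_le b c -> mono_le a c.
Proof.
rewrite /mono_le => -[ab|[ab1 ab2]] [bc|[bc1 bc2]].
- by left; exact: ltn_trans bc.
- by left; rewrite -bc1.
- by left; rewrite ab1.
- by right; split; [rewrite ab1|exact: le_trans bc2].
Qed.

Lemma mono_le_refl (R : realType) (a : nat * R) : mono_le a a.
Proof. by right. Qed.

Lemma mono_le_anti (R : realType) (a b : nat * R) :
  mono_le a b -> mono_le b a -> a = b.
Proof.
case: a b => [a1 a2] [b1 b2]; rewrite /mono_le /=.
move=> [ab|[ab1 ab2]] [ba|[ba1 ba2]].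
- by move: (ltn_trans ab ba); rewrite ltnn.
- by move: ab; rewrite ba1 ltnn.
- by move: ba; rewrite ab1 ltnn.
- by rewrite ab1; congr pair; apply/eqP; rewrite eq_le ab2 ba2.
Qed.

Lemma compat_comp (R : realType) (M M' M'' : pmt R) e1 e2 phi1 psi1 phi2 psi2 :
  @compatible R M M' e1 phi1 psi1 -> @compatible R M' M'' e2 phi2 psi2 ->
  @compatible R M M'' (e1 + e2) (phi2 \o phi1) (psi1 \o psi2).
Proof.
case=> c1 d1 [h1 k1] [v1 w1] [f1 g1].
case=> c2 d2 [h2 k2] [v2 w2] [f2 g2].
split.
- by move=> x; apply: continuous_comp; [exact: c1|exact: c2].
- by move=> x; apply: continuous_comp; [exact: d2|exact: d1].
- split=> G /=; [by rewrite h2 h1 addrA|by rewrite k1 k2 addrA addrAC].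
- split=> G /=.
  + apply: covers_trans (v1 G); apply: (mono d1 k1); exact: v2.
  + apply: covers_trans (w2 G); apply: (mono c2 h2); exact: w1.
- split=> G /=.
  + exact: mono_le_trans (f2 _) (f1 _).
  + exact: mono_le_trans (g1 _) (g2 _).
Qed.

Lemma dI_triangle (R : realType) (M M' M'' : pmt R) :
  (d_I M M'' <= d_I M M' + d_I M' M'')%E.
Proof.
rewrite !dIE; apply: inf_add; [by move=> x []|by move=> x []|].
move=> x y [x0 [phi1 [psi1 c1]]] [y0 [phi2 [psi2 c2]]]; split.
  exact: addr_ge0.
by exists (phi2 \o phi1), (psi1 \o psi2); exact: compat_comp.
Qed.

Lemma equal_compat (R : realType) (M M' : pmt R) :
  pmt_equal M M' -> exists phi psi, @compatible R M M' 0 phi psi.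
Proof.
move=> [f [g [[fg gf] fc gc fh ff]]]; exists f, g; split => //.
- by split => G; rewrite addr0 ?fh //; rewrite -{2}(gf G) fh.
- by split => G; rewrite ?fg ?gf; apply/coversE; split.
- split => G; first by rewrite ff; exact: mono_le_refl.
  by rewrite -{2}(gf G) ff; exact: mono_le_refl.
Qed.

Lemma equal_dI0 (R : realType) (M M' : pmt R) : pmt_equal M M' -> d_I M M' = 0%E.
Proof.
move=> /equal_compat [phi [psi c]]; apply/eqP; rewrite eq_le dI_ge0 andbT.
by apply: ge_ereal_inf; exists 0%:E => //; exists 0 => //; split => //; exists phi, psi.
Qed.

Section ContMono.
Variables (R : realType) (M1 M2 : pmt R) (f : MT M1 -> MT M2).
Hypothesis fh : forall G, hgt (f G) = hgt G.
Hypothesis fm : forall G1 G2, covers G2 G1 -> cmp (f G1) `<=` cmp (f G2).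

Lemma cont_of_mono : continuous f.
Proof.
apply: final_continuous; apply/continuousP => U oU.
rewrite openE => q Uq; rewrite /interior.
set G := @mt_proj R (pmt_d M1) (pmt_B M1) (pmt_K M1) (pmt_F M1) q.
set s := (set_val q).2.
have [eta eta0 Hnb] := near_below oU Uq.
have [e1 e10 rc1] := Lv_rc M1 s.
have [e2 e20 rc2] := Lv_rc M2 s.
have [Op oOp OE] := Lv_comp_open (base_mem q).
rewrite -proj_cmp -/G in OE.
set del := Num.min eta (Num.min e1 e2).
have del0 : 0 < del by rewrite /del !lt_min eta0 e10 e20.
apply: (@filterS _ _ _ (set_val @^-1` [set p | Op p.1 /\ ball s del p.2])).
  move=> q' [Oq' bq'] /=.
  set G' := @mt_proj R (pmt_d M1) (pmt_B M1) (pmt_K M1) (pmt_F M1) q'.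
  move: bq'; rewrite ballRE => /andP[lo hi].
  set t := (set_val q').2 in lo hi *.
  have d1 : del <= eta by rewrite /del !ge_min lexx.
  have d2 : del <= e1 by rewrite /del !ge_min lexx /= ?orbT.
  have d3 : del <= e2 by rewrite /del !ge_min lexx /= ?orbT.
  have hG' : hgt G' = t by [].
  have hG : hgt G = s by [].
  apply: Hnb.
    rewrite !fh hG' hG ltr_distlC; apply/andP; split; lra.
  have x'L := base_mem q'.
  have [ts|st] := leP t s.
    apply: fm; apply/coversE; split; first by rewrite proj_hgt.
    have Gx' : cmp G (set_val q').1.
      by rewrite -OE; split => //; exact: (Lv_mono ts x'L).
    rewrite (proj_cmp q') (cmp_cc Gx'); apply: connected_component_max => //.
    - exact: connected_component_refl.
    - by move=> z /connected_component_sub Lz; exact: (Lv_mono ts Lz).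
    - exact: component_connected.
  have L1E : Lv M1 t = Lv M1 s by apply: rc1; [exact: ltW|lra].
  have L2E : Lv M2 t = Lv M2 s by apply: rc2; [exact: ltW|lra].
  have Gx' : cmp G (set_val q').1 by rewrite -OE; split => //; rewrite -L1E.
  have GG' : cmp G' = cmp G by rewrite (proj_cmp q') -/t L1E -(cmp_cc Gx').
  suff -> : cmp (f G') = cmp (f G) by [].
  apply/esym; apply: cmp_eq; first by rewrite !fh hG hG' L2E.
  by apply: fm; apply/coversE; split; [rewrite hG hG'; exact: ltW|rewrite GG'].
apply: open_nbhs_nbhs; split.
  by apply: base_open; apply: open_prod => //; exact: ball_open.
split; last exact: ballxx.
have := connected_component_refl (base_mem q).
by rewrite -proj_cmp -/G -OE => -[].
Qed.

End ContMono.

Lemma exists_max (R : realType) (X : set R) : finite_set X -> X !=set0 ->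
  exists2 m, X m & forall x, X x -> x <= m.
Proof.
move=> /finite_seqP[s ->] [x0 Xx0].
suff : forall t : seq R, (exists2 y, y \in t & y \in s) ->
    exists2 m, m \in s & forall x, x \in t -> x \in s -> x <= m.
  by case/(_ s) => [|m ms H]; [by exists x0|exists m => // x xs; exact: H].
elim=> [[y]//|a t IH] ex.
have [at_|at_] := boolP (a \in s); last first.
  have [|m ms H] := IH.
    by case: ex => y; rewrite inE => /orP[/eqP->|yt] ys; [rewrite ys in at_|exists y].
  by exists m => // x; rewrite inE => /orP[/eqP->|xt] xs; [rewrite xs in at_|exact: H].
have [[y yt ys]|N] := pselect (exists2 y, y \in t & y \in s).
  have [m ms H] := IH (ex_intro2 _ _ y yt ys).
  exists (Num.max a m); first by rewrite /Num.max; case: ifP.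
  move=> x; rewrite inE => /orP[/eqP->|xt] xs; first by rewrite le_max lexx.
  by rewrite le_max H ?orbT.
exists a => // x; rewrite inE => /orP[/eqP->//|xt] xs.
by exfalso; apply: N; exists x.
Qed.

Definition zf (R : realType) (W : set R) (s : R) : R :=
  xget s [set z | (W z /\ z <= s) /\ forall w, W w -> w <= s -> w <= z].

Lemma zfP (R : realType) (W : set R) s : finite_set W ->
  (exists w, W w /\ w <= s) ->
  [/\ W (zf W s), zf W s <= s & forall w, W w -> w <= s -> w <= zf W s].
Proof.
move=> Wfin [w0 [Ww0 w0s]].
have [m [Wm ms] H] := @exists_max R [set w | W w /\ w <= s]
  (sub_finite_set (fun w (h : W w /\ w <= s) => h.1) Wfin) (ex_intro _ w0 (conj Ww0 w0s)).
have := @xgetPex _ s [set z | (W z /\ z <= s) /\ forall w, W w -> w <= s -> w <= z].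
case.
  by exists m; split => // w Ww ws; exact: H.
by move=> [? ?] H'; split.
Qed.

Lemma hasWv (R : realType) (M : pmt R) (G : MT M) : exists w, Wv M w /\ w <= hgt G.
Proof.
have [x Lx _] := cmp_in G.
move: Lx; rewrite Lv_reps => -[c [Rc Fc] _].
by exists (pmt_F M c); split => //; exists c.
Qed.

Section Shift.
Variables (R : realType) (W : set R) (e : R).
Hypothesis Wfin : finite_set W.
Hypothesis e0 : 0 <= e.
Hypothesis gap : forall w1 w2, W w1 -> W w2 -> w1 < w2 -> e *+ 2 < w2 - w1.

Lemma regime s : (exists w, W w /\ w <= s) -> forall r, zf W s <= r ->
  (r <= s \/ r <= zf W s + e *+ 2) -> forall w, W w -> (w <= r) = (w <= zf W s).
Proof.
move=> hs r zr hr w Ww; have [Wz zs zmax] := zfP Wfin hs.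
apply/idP/idP => [wr|wz]; last exact: le_trans zr.
have [ws|sw] := leP w s; first exact: zmax.
rewrite leNgt; apply/negP => zw.
have := gap Wz Ww zw.
case: hr => hr; lra.
Qed.

Lemma Lreg (M : pmt R) : Wv M `<=` W -> forall s, (exists w, W w /\ w <= s) ->
  forall r, zf W s <= r -> (r <= s \/ r <= zf W s + e *+ 2) ->
  Lv M r = Lv M (zf W s).
Proof.
move=> WM s hs r zr hr; apply: Lv_eqW => w Ww.
exact: (regime hs zr hr (WM _ Ww)).
Qed.

Variables (M1 M2 : pmt R) (phi : MT M1 -> MT M2).
Hypothesis W1 : Wv M1 `<=` W.
Hypothesis W2 : Wv M2 `<=` W.
Hypothesis phic : continuous phi.
Hypothesis phih : forall G, hgt (phi G) = hgt G + e.
Hypothesis phif : forall G, mono_le (freq (phi G)) (freq G).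

Lemma hasW1 (G : MT M1) : exists w, W w /\ w <= hgt G.
Proof. by have [w [Ww ws]] := hasWv G; exists w; split => //; exact: W1. Qed.

Lemma fS_ex (G : MT M1) : exists H : MT M2, hgt H = hgt G /\
  exists G0 : MT M1, [/\ hgt G0 = zf W (hgt G), cmp G0 = cmp G &
    cmp H = cmp (phi G0)].
Proof.
set s := hgt G; have hs := hasW1 G; have [Wz zs _] := zfP Wfin hs.
have LE1 : Lv M1 s = Lv M1 (zf W s) by apply: Lreg => //; left.
have [G0 [G0h G0c]] := relevel (esym LE1).
have LE2 : Lv M2 s = Lv M2 (hgt (phi G0)).
  rewrite phih G0h (@Lreg M2 W2 s hs s) //; last by left.
  rewrite (@Lreg M2 W2 s hs (zf W s + e)) //; first by rewrite lerDl.
  by right; rewrite lerD2l mulr2n lerDl.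
have [H [Hh Hc]] := relevel LE2.
by exists H; split => //; exists G0.
Qed.

Definition fS (G : MT M1) : MT M2 := proj1_sig (cid (fS_ex G)).

Lemma fS_h G : hgt (fS G) = hgt G.
Proof. exact: (proj2_sig (cid (fS_ex G))).1. Qed.

Lemma fS_spec G : exists G0 : MT M1, [/\ hgt G0 = zf W (hgt G), cmp G0 = cmp G &
    cmp (fS G) = cmp (phi G0)].
Proof. exact: (proj2_sig (cid (fS_ex G))).2. Qed.

Lemma fS_mono G1 G2 : covers G2 G1 -> cmp (fS G1) `<=` cmp (fS G2).
Proof.
move=> /coversE [h12 c12].
have [G10 [h10 c10 f1]] := fS_spec G1.
have [G20 [h20 c20 f2]] := fS_spec G2.
rewrite f1 f2; suff /coversE[] : covers (phi G20) (phi G10) by [].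
apply: (mono phic phih); apply/coversE; split; last by rewrite c10 c20.
rewrite h10 h20; have [Wz1 z1s _] := zfP Wfin (hasW1 G1).
have [_ _ zmax] := zfP Wfin (hasW1 G2).
by apply: zmax => //; exact: le_trans h12.
Qed.

Lemma fS_freq G : mono_le (freq (fS G)) (freq G).
Proof.
have [G0 [h0 c0 f0]] := fS_spec G.
by rewrite (freq_cmp f0) -(freq_cmp c0); exact: phif.
Qed.

Lemma fS_cont : continuous fS.
Proof. apply: cont_of_mono; [exact: fS_h|exact: fS_mono]. Qed.

End Shift.

Section Cross.
Variables (R : realType) (W : set R) (e : R).
Hypothesis Wfin : finite_set W.
Hypothesis e0 : 0 <= e.
Hypothesis gap : forall w1 w2, W w1 -> W w2 -> w1 < w2 -> e *+ 2 < w2 - w1.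
Variables (M M' : pmt R) (phi : MT M -> MT M') (psi : MT M' -> MT M).
Hypothesis WM : Wv M `<=` W.
Hypothesis WM' : Wv M' `<=` W.
Hypothesis psic : continuous psi.
Hypothesis phih : forall G, hgt (phi G) = hgt G + e.
Hypothesis psih : forall G, hgt (psi G) = hgt G + e.
Hypothesis cov : forall G, covers (psi (phi G)) G.

Lemma fgK : cancel (fS Wfin e0 gap WM WM' phih) (fS Wfin e0 gap WM' WM psih).
Proof.
move=> G.
have [G0 [h0 c0 fc]] := fS_spec Wfin e0 gap WM WM' phih G.
have [H0 [hH0 cH0 gc]] := fS_spec Wfin e0 gap WM' WM psih
  (fS Wfin e0 gap WM WM' phih G).
rewrite fS_h in hH0.
set s := hgt G in h0 hH0; set z := zf W s in h0 hH0.
have hs : exists w, W w /\ w <= s.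
  by have [w [Ww ws]] := hasWv G; exists w; split => //; exact: WM.
have [_ zs _] := zfP Wfin hs.
have L1 : Lv M (z + e) = Lv M z.
  apply: (Lreg Wfin gap WM hs); first by rewrite lerDl.
  by right; rewrite lerD2l mulr2n lerDl.
have L2 : Lv M (z + e + e) = Lv M z.
  apply: (Lreg Wfin gap WM hs); first by rewrite -addrA lerDl addr_ge0.
  by right; rewrite -addrA lerD2l mulr2n.
have cv : covers (phi G0) H0.
  apply/coversE; split; first by rewrite phih hH0 h0 lerDl.
  by rewrite cH0 fc.
have /coversE [_ sub1] := mono psic psih cv.
have /coversE [_ sub2] := cov G0.
have E1 : cmp (psi H0) = cmp (psi (phi G0)).
  apply: cmp_eq sub1; by rewrite !psih phih hH0 h0 L1 L2.
have E2 : cmp G0 = cmp (psi (phi G0)).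
  apply: cmp_eq sub2; by rewrite psih phih h0 L2.
apply: mt_ext; first by rewrite !fS_h.
by rewrite gc E1 -E2 c0.
Qed.

End Cross.

Lemma dI0_equal (R : realType) (M M' : pmt R) : d_I M M' = 0%E -> pmt_equal M M'.
Proof.
move=> dI0.
set W := Wv M `|` Wv M'.
have Wfin : finite_set W by rewrite /W finite_setU; split; exact: Wv_fin.
have WM : Wv M `<=` W by move=> w; left.
have WM' : Wv M' `<=` W by move=> w; right.
have [gam gam0 gamP] : exists2 gam, 0 < gam &
    forall x, [set p.2 - p.1 | p in [set p : R * R | W p.1 /\ W p.2 /\ p.1 < p.2]] x ->
    gam <= x.
  apply: finite_pos_min; last by move=> _ [p [_ [_ h]] <-]; rewrite subr_gt0.
  apply: finite_image; apply: sub_finite_set (finite_setX Wfin Wfin).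
  by move=> p [h1 [h2 _]].
have : (d_I M M' < (gam / 3)%:E)%E by rewrite dI0 lte_fin divr_gt0.
rewrite dIE => /ereal_inf_lt [_ [e [e0 [phi [psi hc]]]] <-].
rewrite lte_fin => egam.
have gap : forall w1 w2, W w1 -> W w2 -> w1 < w2 -> e *+ 2 < w2 - w1.
  move=> w1 w2 W1 W2 w12.
  have := gamP (w2 - w1) (ex_intro2 _ _ (w1, w2) (conj W1 (conj W2 w12)) erefl).
  rewrite mulr2n; lra.
case: (hc) => phic psic [phih psih] [cov1 cov2] [phif psif].
exists (fS Wfin e0 gap WM WM' phih), (fS Wfin e0 gap WM' WM psih); split.
- split; first exact: fgK.
  exact: (fgK Wfin e0 gap WM' WM phic psih phih cov2).
- exact: (@fS_cont _ _ _ Wfin e0 gap M M' phi WM WM' phic phih).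
- exact: (@fS_cont _ _ _ Wfin e0 gap M' M psi WM' WM psic psih).
- exact: fS_h.
- move=> G; apply: mono_le_anti; first exact: (fS_freq Wfin e0 gap WM WM' phih phif).
  rewrite -{1}(fgK Wfin e0 gap WM WM' psic phih psih cov1 G).
  exact: (fS_freq Wfin e0 gap WM' WM psih psif).
Qed.


Lemma dI_main (R : realType) (M M' M'' : pmt R) :
  [/\ (0 <= d_I M M')%E /\ ((0 < d_I M M')%E <-> ~ pmt_equal M M'),
      d_I M M' = d_I M' M &
      (d_I M M'' <= d_I M M' + d_I M' M'')%E].
Proof.
split.
- split; first exact: dI_ge0.
  split.
  + by move=> dpos eq; move: dpos; rewrite (equal_dI0 eq) ltxx.
  + move=> neq; rewrite lt_def dI_ge0 andbT; apply/eqP => d0.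
    by apply: neq; exact: dI0_equal.
- exact: dI_sym.
- exact: dI_triangle.
Qed.

End Aux.

Local Open Scope ereal_scope.

Theorem mainTheorem10 (R : realType) (M M' M'' : pmt R) :
  [/\ 0 <= d_I M M' /\ (0 < d_I M M' <-> ~ pmt_equal M M'),
      d_I M M' = d_I M' M &
      d_I M M'' <= d_I M M' + d_I M' M''].
Proof. exact: Aux.dI_main. Qed.
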